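(* Let $(P,Q)$ be a smooth solution on $[\tau_1,\tau_2]\times S^1$ of \[ P_{\tau\tau}-e^{-2\tau}P_{\theta\theta}-e^{2P}(Q_\tau^2-e^{-2\tau}Q_\theta^2)=0,\qquad Q_{\tau\tau}-e^{-2\tau}Q_{\theta\theta}+2(P_\tau Q_\tau-e^{-2\tau}P_\theta Q_\theta)=0 . \] Assume $\tau_2\ge\tau_1\ge 2$ and $1\le P(\tau,\theta)\le\tau-1$ for all $(\tau,\theta)\in[\tau_1,\tau_2]\times S^1$. Then $F(\tau)\le F(\tau_1)(\tau_1/\tau)^2$ for all $\tau\in[\tau_1,\tau_2]$.
   Context: $S^1=\mathbb{R}/2\pi\mathbb{Z}$. The function $F$ is \[ F(\tau)=\tfrac12\sup_{\theta\in S^1}\Big[(P_\tau-\tfrac1\tau P+e^{-\tau}P_\theta)^2+e^{2P}(Q_\tau+e^{-\tau}Q_\theta)^2\Big] +\tfrac12\sup_{\theta\in S^1}\Big[(P_\tau-\tfrac1\tau P-e^{-\tau}P_\theta)^2+e^{2P}(Q_\tau-e^{-\tau}Q_\theta)^2\Big]. \] *)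

(* Defs.v *)
From Stdlib Require Import Reals Lra.
From Coquelicot Require Import Coquelicot.
Open Scope R_scope.

Definition d_tau (f : R -> R -> R) : R -> R -> R :=
  fun t th => Derive (fun s => f s th) t.
Definition d_th (f : R -> R -> R) : R -> R -> R :=
  fun t th => Derive (fun s => f t s) th.

Definition cont2 (f : R -> R -> R) : Prop :=
  forall t th, continuous (fun p : R * R => f (fst p) (snd p)) (t, th).

Fixpoint Ck (k : nat) (f : R -> R -> R) : Prop :=
  match k with
  | O => cont2 f
  | S k' => cont2 f /\
      (forall t th, ex_derive (fun s => f s th) t /\ ex_derive (fun s => f t s) th) /\
      Ck k' (d_tau f) /\ Ck k' (d_th f)
  end.

Definition smooth2 (f : R -> R -> R) : Prop := forall k, Ck k f.

(* 2*pi periodicity in theta: functions on R x S^1, S^1 = R / 2 pi Z *)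
Definition periodic_th (f : R -> R -> R) : Prop :=
  forall t th, f t (th + 2 * PI) = f t th.

(* supremum over theta in S^1 (finite for continuous periodic data) *)
Definition sup_th (g : R -> R) : R := real (Lub_Rbar (fun y => exists th, y = g th)).

Definition F (P Q : R -> R -> R) (t : R) : R :=
  / 2 * sup_th (fun th =>
      (d_tau P t th - / t * P t th + exp (- t) * d_th P t th) ^ 2
      + exp (2 * P t th) * (d_tau Q t th + exp (- t) * d_th Q t th) ^ 2)
  + / 2 * sup_th (fun th =>
      (d_tau P t th - / t * P t th - exp (- t) * d_th P t th) ^ 2
      + exp (2 * P t th) * (d_tau Q t th - exp (- t) * d_th Q t th) ^ 2).

(* Main.v *)
Require Import Defs.
From Stdlib Require Import Reals.
From Coquelicot Require Import Coquelicot.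
From Stdlib Require Import Lra Psatz Classical.
Open Scope R_scope.

Lemma exd_cont (g : R -> R) x : ex_derive g x -> continuity_pt g x.
Proof.
  intros H. apply continuity_pt_filterlim.
  apply (ex_derive_continuous (K:=R_AbsRing) (V:=R_NormedModule) g x H).
Qed.
Lemma between_abs a b c : Rmin a b <= c <= Rmax a b -> Rabs (c - a) <= Rabs (b - a).
Proof.
  unfold Rmin, Rmax; destruct (Rle_dec a b); intros; unfold Rabs;
  repeat destruct Rcase_abs; lra.
Qed.

Lemma diff_of_C1 (f : R -> R -> R) x y :
  (forall u v, ex_derive (fun z => f z v) u) ->
  (forall u v, ex_derive (fun z => f u z) v) ->
  continuity_2d_pt (d_tau f) x y ->
  differentiable_pt_lim f x y (d_tau f x y) (d_th f x y).
Proof.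
  intros H1 H2 Hc eps.
  assert (He2 : 0 < eps / 2) by (destruct eps; simpl; lra).
  destruct (Hc (mkposreal _ He2)) as [d1 Hd1].
  assert (Hy : derivable_pt_lim (fun z => f x z) y (d_th f x y)).
  { apply is_derive_Reals. apply Derive_correct. apply H2. }
  destruct (Hy _ He2) as [d2 Hd2].
  exists (mkposreal _ (Rmin_pos _ _ (cond_pos d1) (cond_pos d2))).
  intros u v Hu Hv. simpl in Hu, Hv.
  assert (Hu1 : Rabs (u - x) < d1) by (eapply Rlt_le_trans; [exact Hu| apply Rmin_l]).
  assert (Hv1 : Rabs (v - y) < d1) by (eapply Rlt_le_trans; [exact Hv| apply Rmin_l]).
  assert (Hv2 : Rabs (v - y) < d2) by (eapply Rlt_le_trans; [exact Hv| apply Rmin_r]).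
  assert (P1 : Rabs (f u v - f x v - d_tau f x y * (u - x)) <= eps / 2 * Rabs (u - x)).
  { destruct (MVT_gen (fun z => f z v) x u (fun z => d_tau f z v)) as [c [Hc1 Hc2]].
    - intros z _. apply Derive_correct. apply H1.
    - intros z _. apply exd_cont. apply H1.
    - simpl in Hc2. rewrite Hc2.
      replace (d_tau f c v * (u - x) - d_tau f x y * (u - x)) with
        ((d_tau f c v - d_tau f x y) * (u - x)) by ring.
      rewrite Rabs_mult. apply Rmult_le_compat_r. apply Rabs_pos.
      left. apply (Hd1 c v).
      + apply Rle_lt_trans with (Rabs (u - x)); [|exact Hu1].
        apply between_abs; exact Hc1.
      + exact Hv1. }
  assert (P2 : Rabs (f x v - f x y - d_th f x y * (v - y)) <= eps / 2 * Rabs (v - y)).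
  { destruct (Req_dec v y) as [->|Hne].
    - replace (f x y - f x y - d_th f x y * (y - y)) with 0 by ring.
      rewrite Rabs_R0, Rminus_eq_0, Rabs_R0. lra.
    - assert (Hh : v - y <> 0) by lra.
      specialize (Hd2 (v - y) Hh Hv2). replace (y + (v - y)) with v in Hd2 by ring.
      replace (f x v - f x y - d_th f x y * (v - y)) with
        (((f x v - f x y) / (v - y) - d_th f x y) * (v - y)) by (field; exact Hh).
      rewrite Rabs_mult. apply Rmult_le_compat_r. apply Rabs_pos. lra. }
  replace (f u v - f x y - (d_tau f x y * (u - x) + d_th f x y * (v - y))) with
    ((f u v - f x v - d_tau f x y * (u - x)) + (f x v - f x y - d_th f x y * (v - y))) by ring.
  eapply Rle_trans. apply Rabs_triang.
  assert (Rabs (u - x) <= Rmax (Rabs (u - x)) (Rabs (v - y))) by apply Rmax_l.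
  assert (Rabs (v - y) <= Rmax (Rabs (u - x)) (Rabs (v - y))) by apply Rmax_r.
  destruct eps as [e He]; simpl in *. nra.
Qed.

Lemma chain (g : R -> R -> R) (c : R -> R) r dc :
  Ck 1 g -> is_derive c r dc ->
  is_derive (fun s => g s (c s)) r (d_tau g r (c r) + dc * d_th g r (c r)).
Proof.
  intros [Hc [Hd Hk]] Hcd. simpl in Hk.
  apply is_derive_Reals.
  replace (d_tau g r (c r) + dc * d_th g r (c r)) with
    (d_tau g r (c r) * 1 + d_th g r (c r) * dc) by ring.
  apply (derivable_pt_lim_comp_2d g (fun s => s) c).
  - apply diff_of_C1. intros; apply Hd. intros; apply Hd.
    apply continuity_2d_pt_filterlim. apply (proj1 Hk).
  - apply derivable_pt_lim_id.
  - apply is_derive_Reals. exact Hcd.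
Qed.
Lemma dAp (u1 u2 u3 u4 u5 : R -> R) d1 d2 d3 d4 d5 s :
  s <> 0 ->
  is_derive u1 s d1 -> is_derive u2 s d2 -> is_derive u3 s d3 ->
  is_derive u4 s d4 -> is_derive u5 s d5 ->
  is_derive (fun r => (u2 r - / r * u1 r + exp (- r) * u3 r) ^ 2
     + exp (2 * u1 r) * (u4 r + exp (- r) * u5 r) ^ 2) s
   (2 * (u2 s - / s * u1 s + exp (- s) * u3 s) *
       (d2 + / s ^ 2 * u1 s - / s * d1 - exp (- s) * u3 s + exp (- s) * d3)
    + exp (2 * u1 s) * (2 * d1 * (u4 s + exp (- s) * u5 s) ^ 2
       + 2 * (u4 s + exp (- s) * u5 s) * (d4 - exp (- s) * u5 s + exp (- s) * d5))).
Proof.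
  intros Hs H1 H2 H3 H4 H5.
  auto_derive.
  - repeat split; try exact Hs; eexists; eassumption.
  - replace (Derive (fun x : R => u1 x) s) with d1 by (symmetry; apply is_derive_unique; exact H1).
    replace (Derive (fun x : R => u2 x) s) with d2 by (symmetry; apply is_derive_unique; exact H2).
    replace (Derive (fun x : R => u3 x) s) with d3 by (symmetry; apply is_derive_unique; exact H3).
    replace (Derive (fun x : R => u4 x) s) with d4 by (symmetry; apply is_derive_unique; exact H4).
    replace (Derive (fun x : R => u5 x) s) with d5 by (symmetry; apply is_derive_unique; exact H5).
    field. exact Hs.
Qed.
Lemma dAm (u1 u2 u3 u4 u5 : R -> R) d1 d2 d3 d4 d5 s :
  s <> 0 ->
  is_derive u1 s d1 -> is_derive u2 s d2 -> is_derive u3 s d3 ->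
  is_derive u4 s d4 -> is_derive u5 s d5 ->
  is_derive (fun r => (u2 r - / r * u1 r - exp (- r) * u3 r) ^ 2
     + exp (2 * u1 r) * (u4 r - exp (- r) * u5 r) ^ 2) s
   (2 * (u2 s - / s * u1 s - exp (- s) * u3 s) *
       (d2 + / s ^ 2 * u1 s - / s * d1 + exp (- s) * u3 s - exp (- s) * d3)
    + exp (2 * u1 s) * (2 * d1 * (u4 s - exp (- s) * u5 s) ^ 2
       + 2 * (u4 s - exp (- s) * u5 s) * (d4 + exp (- s) * u5 s - exp (- s) * d5))).
Proof.
  intros Hs H1 H2 H3 H4 H5.
  auto_derive.
  - repeat split; try exact Hs; eexists; eassumption.
  - replace (Derive (fun x : R => u1 x) s) with d1 by (symmetry; apply is_derive_unique; exact H1).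
    replace (Derive (fun x : R => u2 x) s) with d2 by (symmetry; apply is_derive_unique; exact H2).
    replace (Derive (fun x : R => u3 x) s) with d3 by (symmetry; apply is_derive_unique; exact H3).
    replace (Derive (fun x : R => u4 x) s) with d4 by (symmetry; apply is_derive_unique; exact H4).
    replace (Derive (fun x : R => u5 x) s) with d5 by (symmetry; apply is_derive_unique; exact H5).
    field. exact Hs.
Qed.
Lemma algP s p pt pth qt qth ptth pthth qtth qthth e E ptt qtt :
  s <> 0 ->
  ptt - e^2 * pthth - E * (qt^2 - e^2 * qth^2) = 0 ->
  qtt - e^2 * qthth + 2 * (pt * qt - e^2 * pth * qth) = 0 ->
  let d1 := pt + - e * pth in
  let d2 := ptt + - e * ptth in
  let d3 := ptth + - e * pthth in
  let d4 := qtt + - e * qtth in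
  let d5 := qtth + - e * qthth in
   (2 * (pt - / s * p + e * pth) *
       (d2 + / s ^ 2 * p - / s * d1 - e * pth + e * d3)
    + E * (2 * d1 * (qt + e * qth) ^ 2
       + 2 * (qt + e * qth) * (d4 - e * qth + e * d5)))
  = - ((pt - / s * p + e * pth) ^ 2 + E * (qt + e * qth) ^ 2)
    + (1 - 2 / s) * (pt - / s * p + e * pth) * (pt - / s * p - e * pth)
    + (1 - 2 * p / s) * E * (qt + e * qth) * (qt - e * qth).
Proof.
  intros Hs H1 H2 d1 d2 d3 d4 d5. unfold d1, d2, d3, d4, d5.
  replace ptt with (e^2 * pthth + E * (qt^2 - e^2 * qth^2)) by lra.
  replace qtt with (e^2 * qthth - 2 * (pt * qt - e^2 * pth * qth)) by lra.
  field. exact Hs.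
Qed.
Lemma algM s p pt pth qt qth ptth pthth qtth qthth e E ptt qtt :
  s <> 0 ->
  ptt - e^2 * pthth - E * (qt^2 - e^2 * qth^2) = 0 ->
  qtt - e^2 * qthth + 2 * (pt * qt - e^2 * pth * qth) = 0 ->
  let d1 := pt + e * pth in
  let d2 := ptt + e * ptth in
  let d3 := ptth + e * pthth in
  let d4 := qtt + e * qtth in
  let d5 := qtth + e * qthth in
   (2 * (pt - / s * p - e * pth) *
       (d2 + / s ^ 2 * p - / s * d1 + e * pth - e * d3)
    + E * (2 * d1 * (qt - e * qth) ^ 2
       + 2 * (qt - e * qth) * (d4 + e * qth - e * d5)))
  = - ((pt - / s * p - e * pth) ^ 2 + E * (qt - e * qth) ^ 2)
    + (1 - 2 / s) * (pt - / s * p + e * pth) * (pt - / s * p - e * pth)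
    + (1 - 2 * p / s) * E * (qt + e * qth) * (qt - e * qth).
Proof.
  intros Hs H1 H2 d1 d2 d3 d4 d5. unfold d1, d2, d3, d4, d5.
  replace ptt with (e^2 * pthth + E * (qt^2 - e^2 * qth^2)) by lra.
  replace qtt with (e^2 * qthth - 2 * (pt * qt - e^2 * pth * qth)) by lra.
  field. exact Hs.
Qed.



Lemma mvt_step (x : R -> R) r s B : r < s ->
  (forall rho, r <= rho <= s -> exists D, is_derive x rho D /\ D <= B) ->
  x s - x r <= (s - r) * B.
Proof.
  intros Hrs H.
  assert (Hd : forall rho, r <= rho <= s -> is_derive x rho (Derive x rho) /\ Derive x rho <= B).
  { intros rho Hr. destruct (H rho Hr) as [D [HD HB]].
    rewrite (is_derive_unique _ _ _ HD). split; auto. }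
  destruct (MVT_gen x r s (Derive x)) as [c [Hc1 Hc2]].
  - intros z Hz. rewrite Rmin_left, Rmax_right in Hz by lra. apply Hd; lra.
  - intros z Hz. rewrite Rmin_left, Rmax_right in Hz by lra. apply exd_cont.
    eexists. apply Hd; lra.
  - simpl in Hc2. rewrite Hc2. rewrite Rmin_left, Rmax_right in Hc1 by lra.
    destruct (Hd c Hc1) as [_ HB]. nra.
Qed.

Lemma exp_le x y : x <= y -> exp x <= exp y.
Proof. intros [H|H]. left; apply exp_increasing; auto. subst; lra. Qed.

Lemma exp_lip rho s : 0 <= rho <= s -> 0 <= exp (- rho) - exp (- s) <= s - rho.
Proof.
  intros H.
  assert (E : exp (- s) = exp (- rho) * exp (- (s - rho))) by (rewrite <- exp_plus; f_equal; ring).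
  assert (H1 := exp_ineq1_le (- (s - rho))).
  assert (H2 : exp (- rho) <= 1) by (rewrite <- exp_0; apply exp_le; lra).
  assert (H3 : 0 < exp (- rho)) by apply exp_pos.
  assert (H4 : exp (- (s - rho)) <= 1) by (rewrite <- exp_0; apply exp_le; lra).
  rewrite E. split; nra.
Qed.

Definition Hyps (Ap Am : R -> R -> R) (a b : R) : Prop :=
  (2 <= a <= b) /\
  (forall s th, a <= s <= b -> 0 <= Ap s th /\ 0 <= Am s th) /\
  (forall s, a <= s <= b ->
     (forall th, Ap s th <= sup_th (Ap s)) /\ (exists th, 0 <= th <= 2 * PI /\ Ap s th = sup_th (Ap s)) /\
     (forall th, Am s th <= sup_th (Am s)) /\ (exists th, 0 <= th <= 2 * PI /\ Am s th = sup_th (Am s))) /\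
  (forall eta, 0 < eta -> exists d, 0 < d /\ forall x y u v, a <= x <= b -> -1 <= y <= 2 * PI + 1 ->
      a <= u <= b -> -1 <= v <= 2 * PI + 1 -> Rabs (u - x) < d -> Rabs (v - y) < d ->
      Rabs (Ap u v - Ap x y) < eta /\ Rabs (Am u v - Am x y) < eta) /\
  (forall th0 s0 s, a <= s <= b -> exists D,
      is_derive (fun r => Ap r (th0 + exp (- r) - exp (- s0))) s D /\
      D <= - (1 - (1 - 2 / s) / 2) * Ap s (th0 + exp (- s) - exp (- s0))
           + (1 - 2 / s) / 2 * Am s (th0 + exp (- s) - exp (- s0))) /\
  (forall th0 s0 s, a <= s <= b -> exists D,
      is_derive (fun r => Am r (th0 - exp (- r) + exp (- s0))) s D /\
      D <= - (1 - (1 - 2 / s) / 2) * Am s (th0 - exp (- s) + exp (- s0))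
           + (1 - 2 / s) / 2 * Ap s (th0 - exp (- s) + exp (- s0))).


Lemma step_p Ap Am a b eta d r s :
  Hyps Ap Am a b -> 0 < eta -> 0 < d ->
  (forall x y u v, a <= x <= b -> -1 <= y <= 2 * PI + 1 ->
      a <= u <= b -> -1 <= v <= 2 * PI + 1 -> Rabs (u - x) < d -> Rabs (v - y) < d ->
      Rabs (Ap u v - Ap x y) < eta /\ Rabs (Am u v - Am x y) < eta) ->
  a <= r -> r < s -> s <= b -> s - r < d -> s - r < 1 ->
  sup_th (Ap s) - sup_th (Ap r) <=
    (s - r) * (- (1 - (1 - 2 / s) / 2) * sup_th (Ap s) + (1 - 2 / s) / 2 * sup_th (Am s) + eta).
Proof.
  intros [Hab [Hnn [Hsup [_ [Hdp _]]]]] Heta Hd Huc Har Hrs Hsb Hd1 Hd2.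
  destruct (Hsup s ltac:(lra)) as [Sp1 [[thp [Hthp Hthp2]] [Sm1 _]]].
  destruct (Hsup r ltac:(lra)) as [Rp1 _].
  pose (x := fun rho => Ap rho (thp + exp (- rho) - exp (- s))).
  assert (Hxs : x s = sup_th (Ap s)).
  { unfold x. replace (thp + exp (- s) - exp (- s)) with thp by ring. exact Hthp2. }
  assert (Hxr : x r <= sup_th (Ap r)) by (unfold x; apply Rp1).
  assert (Hmps : 0 <= sup_th (Ap s)) by (rewrite <- Hthp2; apply Hnn; lra).
  assert (Hmms : 0 <= sup_th (Am s)) by (eapply Rle_trans; [apply (Hnn s 0); lra | apply Sm1]).
  enough (x s - x r <= (s - r) * (- (1 - (1 - 2 / s) / 2) * sup_th (Ap s) + (1 - 2 / s) / 2 * sup_th (Am s) + eta)) by lra.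
  apply mvt_step; [lra|].
  intros rho Hrho.
  destruct (Hdp thp s rho ltac:(lra)) as [D [HD HDb]].
  exists D. split; [exact HD|].
  set (c := thp + exp (- rho) - exp (- s)) in *.
  assert (Hc : 0 <= c - thp <= s - rho) by (unfold c; pose proof (exp_lip rho s); lra).
  destruct (Huc s thp rho c ltac:(lra) ltac:(lra) ltac:(lra) ltac:(lra)) as [U1 _].
  { rewrite Rabs_left1 by lra; lra. }
  { rewrite Rabs_pos_eq by lra; lra. }
  destruct (Huc s c rho c ltac:(lra) ltac:(lra) ltac:(lra) ltac:(lra)) as [_ U2].
  { rewrite Rabs_left1 by lra; lra. }
  { rewrite Rminus_eq_0, Rabs_R0; lra. }
  apply Rabs_lt_between in U1. apply Rabs_lt_between in U2.
  assert (Am s c <= sup_th (Am s)) by apply Sm1.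
  assert (Hk1 : 0 <= (1 - 2 / rho) / 2 <= (1 - 2 / s) / 2).
  { split. apply Rmult_le_pos; [|lra]. assert (2 / rho <= 1) by (apply Rmult_le_reg_r with rho; [lra| field_simplify; lra]). lra.
    assert (2 / s <= 2 / rho) by (apply Rmult_le_compat_l; [lra| apply Rinv_le_contravar; lra]). lra. }
  assert (Hk2 : (1 - 2 / s) / 2 <= 1 / 2) by (assert (0 < 2 / s) by (apply Rdiv_lt_0_compat; lra); lra).
  set (al := (1 - 2 / rho) / 2) in *. set (be := (1 - 2 / s) / 2) in *.
  assert (HA : sup_th (Ap s) - eta < Ap rho c) by lra.
  assert (HB : Am rho c < sup_th (Am s) + eta) by lra.
  nra.
Qed.

Lemma step_m Ap Am a b eta d r s :
  Hyps Ap Am a b -> 0 < eta -> 0 < d ->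
  (forall x y u v, a <= x <= b -> -1 <= y <= 2 * PI + 1 ->
      a <= u <= b -> -1 <= v <= 2 * PI + 1 -> Rabs (u - x) < d -> Rabs (v - y) < d ->
      Rabs (Ap u v - Ap x y) < eta /\ Rabs (Am u v - Am x y) < eta) ->
  a <= r -> r < s -> s <= b -> s - r < d -> s - r < 1 ->
  sup_th (Am s) - sup_th (Am r) <=
    (s - r) * (- (1 - (1 - 2 / s) / 2) * sup_th (Am s) + (1 - 2 / s) / 2 * sup_th (Ap s) + eta).
Proof.
  intros [Hab [Hnn [Hsup [_ [_ Hdm]]]]] Heta Hd Huc Har Hrs Hsb Hd1 Hd2.
  destruct (Hsup s ltac:(lra)) as [Sp1 [_ [Sm1 [thp [Hthp Hthp2]]]]].
  destruct (Hsup r ltac:(lra)) as [_ [_ [Rp1 _]]].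
  pose (x := fun rho => Am rho (thp - exp (- rho) + exp (- s))).
  assert (Hxs : x s = sup_th (Am s)).
  { unfold x. replace (thp - exp (- s) + exp (- s)) with thp by ring. exact Hthp2. }
  assert (Hxr : x r <= sup_th (Am r)) by (unfold x; apply Rp1).
  assert (Hmps : 0 <= sup_th (Am s)) by (rewrite <- Hthp2; apply Hnn; lra).
  assert (Hmms : 0 <= sup_th (Ap s)) by (eapply Rle_trans; [apply (proj1 (Hnn s 0 ltac:(lra))) | apply Sp1]).
  enough (x s - x r <= (s - r) * (- (1 - (1 - 2 / s) / 2) * sup_th (Am s) + (1 - 2 / s) / 2 * sup_th (Ap s) + eta)) by lra.
  apply mvt_step; [lra|].
  intros rho Hrho.
  destruct (Hdm thp s rho ltac:(lra)) as [D [HD HDb]].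
  exists D. split; [exact HD|].
  set (c := thp - exp (- rho) + exp (- s)) in *.
  assert (Hc : 0 <= thp - c <= s - rho) by (unfold c; pose proof (exp_lip rho s); lra).
  destruct (Huc s thp rho c ltac:(lra) ltac:(lra) ltac:(lra) ltac:(lra)) as [_ U1].
  { rewrite Rabs_left1 by lra; lra. }
  { rewrite Rabs_left1 by lra; lra. }
  destruct (Huc s c rho c ltac:(lra) ltac:(lra) ltac:(lra) ltac:(lra)) as [U2 _].
  { rewrite Rabs_left1 by lra; lra. }
  { rewrite Rminus_eq_0, Rabs_R0; lra. }
  apply Rabs_lt_between in U1. apply Rabs_lt_between in U2.
  assert (Ap s c <= sup_th (Ap s)) by apply Sp1.
  assert (Hk1 : 0 <= (1 - 2 / rho) / 2 <= (1 - 2 / s) / 2).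
  { split. apply Rmult_le_pos; [|lra]. assert (2 / rho <= 1) by (apply Rmult_le_reg_r with rho; [lra| field_simplify; lra]). lra.
    assert (2 / s <= 2 / rho) by (apply Rmult_le_compat_l; [lra| apply Rinv_le_contravar; lra]). lra. }
  assert (Hk2 : (1 - 2 / s) / 2 <= 1 / 2) by (assert (0 < 2 / s) by (apply Rdiv_lt_0_compat; lra); lra).
  set (al := (1 - 2 / rho) / 2) in *. set (be := (1 - 2 / s) / 2) in *.
  assert (HA : sup_th (Am s) - eta < Am rho c) by lra.
  assert (HB : Ap rho c < sup_th (Ap s) + eta) by lra.
  nra.
Qed.

Definition MM (Ap Am : R -> R -> R) (s : R) := sup_th (Ap s) + sup_th (Am s).

Lemma MM_nn Ap Am a b s : Hyps Ap Am a b -> a <= s <= b -> 0 <= MM Ap Am s.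
Proof.
  intros [Hab [Hnn [Hsup _]]] Hs. destruct (Hsup s Hs) as [S1 [_ [S2 _]]].
  unfold MM. pose proof (S1 0). pose proof (S2 0). pose proof (Hnn s 0 Hs). lra.
Qed.

Lemma core Ap Am a b eps Cb : Hyps Ap Am a b -> 0 < eps -> 0 <= Cb ->
  exists dl, 0 < dl /\ forall r s, a <= r -> r < s -> s <= b -> s - r < dl ->
    r ^ 2 * MM Ap Am r <= Cb -> s ^ 2 * MM Ap Am s - r ^ 2 * MM Ap Am r <= eps * (s - r).
Proof.
  intros H Heps HCb.
  destruct H as [Hab [Hnn [Hsup [Huc Hd]]]] eqn:EH.
  assert (Hb2 : 0 < b ^ 2) by nra.
  set (eta := eps / (8 * b ^ 2)).
  assert (Heta : 0 < eta) by (unfold eta; apply Rdiv_lt_0_compat; lra).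
  destruct (Huc eta Heta) as [d [Hd0 Hucd]].
  set (Mb := Cb / a ^ 2).
  assert (HMb : 0 <= Mb) by (unfold Mb; apply Rmult_le_pos; [lra| left; apply Rinv_0_lt_compat; nra]).
  set (d3 := eps / (6 * Mb + 1)).
  assert (Hd3 : 0 < d3) by (unfold d3; apply Rdiv_lt_0_compat; lra).
  exists (Rmin (Rmin d 1) d3). split.
  { apply Rmin_pos; [apply Rmin_pos|]; lra. }
  intros r s Har Hrs Hsb Hdl HC.
  assert (Hdd : s - r < d) by (eapply Rlt_le_trans; [exact Hdl| eapply Rle_trans; [apply Rmin_l| apply Rmin_l]]).
  assert (Hd1 : s - r < 1) by (eapply Rlt_le_trans; [exact Hdl| eapply Rle_trans; [apply Rmin_l| apply Rmin_r]]).
  assert (Hd3' : s - r < d3) by (eapply Rlt_le_trans; [exact Hdl| apply Rmin_r]).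
  pose proof (step_p Ap Am a b eta d r s H Heta Hd0 Hucd Har Hrs Hsb Hdd Hd1) as SP.
  pose proof (step_m Ap Am a b eta d r s H Heta Hd0 Hucd Har Hrs Hsb Hdd Hd1) as SM.
  assert (Hmr : 0 <= MM Ap Am r) by (apply (MM_nn Ap Am a b); auto; lra).
  assert (Hms : 0 <= MM Ap Am s) by (apply (MM_nn Ap Am a b); auto; lra).
  assert (HMr : MM Ap Am r <= Mb).
  { assert (Ha2 : 0 < a ^ 2) by nra.
    unfold Mb. apply Rmult_le_reg_r with (a ^ 2). exact Ha2.
    unfold Rdiv. rewrite Rmult_assoc, Rinv_l by (apply Rgt_not_eq; exact Ha2). rewrite Rmult_1_r.
    assert (a ^ 2 <= r ^ 2) by nra. nra. }
  set (Ms := MM Ap Am s) in *. set (Mr := MM Ap Am r) in *.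
  assert (SUM : Ms - Mr <= (s - r) * (- (2 / s) * Ms + 2 * eta)).
  { unfold Ms, Mr, MM. replace (2 / s) with (1 - (1 - 2 / s)) by ring. nra. }
  destruct (Rle_dec (s ^ 2 * Ms) (r ^ 2 * Mr)) as [Hle|Hgt].
  { nra. }
  apply Rnot_le_lt in Hgt.
  set (D := s - r) in *.
  assert (Hs0 : 0 < s) by lra.
  assert (E1 : s ^ 2 * Ms - r ^ 2 * Mr <= D * (- 2 * s * Ms + 2 * eta * s ^ 2 + (s + r) * Mr)).
  { replace (s ^ 2 * Ms - r ^ 2 * Mr) with (s ^ 2 * (Ms - Mr) + (s - r) * (s + r) * Mr) by ring.
    assert (s ^ 2 * (Ms - Mr) <= s ^ 2 * (D * (- (2 / s) * Ms + 2 * eta))) by (apply Rmult_le_compat_l; nra).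
    replace (s ^ 2 * (D * (- (2 / s) * Ms + 2 * eta))) with (D * (- 2 * s * Ms + 2 * eta * s ^ 2)) in H0 by (field; lra).
    unfold D in *. nra. }
  assert (E2 : - 2 * s * Ms + (s + r) * Mr <= 3 * D * Mr).
  { assert (s * (- 2 * s * Ms + (s + r) * Mr) <= s * (3 * D * Mr)).
    { unfold D.
      assert (Mr * ((s - r) * (s + 2 * r)) <= Mr * ((s - r) * (3 * s))).
      { apply Rmult_le_compat_l; [lra|]. apply Rmult_le_compat_l; lra. }
      replace (s * (- 2 * s * Ms + (s + r) * Mr)) with (- 2 * (s ^ 2 * Ms) + (s * s + s * r) * Mr) by ring.
      lra. }
    apply Rmult_le_reg_l with s; lra. }
  assert (E3 : 2 * eta * s ^ 2 <= eps / 4).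
  { unfold eta. assert (s ^ 2 <= b ^ 2) by nra.
    replace (2 * (eps / (8 * b ^ 2)) * s ^ 2) with (eps / 4 * (s ^ 2 / b ^ 2)) by (field; lra).
    assert (s ^ 2 / b ^ 2 <= 1) by (apply Rmult_le_reg_r with (b ^ 2); [lra| unfold Rdiv; rewrite Rmult_assoc, Rinv_l by lra; lra]).
    nra. }
  assert (E4 : 3 * D * Mr <= eps / 2).
  { assert (D * (6 * Mb + 1) <= eps).
    { unfold d3 in Hd3'. apply Rmult_le_reg_r with (/ (6 * Mb + 1)). apply Rinv_0_lt_compat; lra.
      rewrite Rmult_assoc, Rinv_r by lra. lra. }
    assert (0 < D) by (unfold D; lra). nra. }
  assert (0 < D) by (unfold D; lra).
  nra.
Qed.

Lemma main_eps Ap Am a b eps t : Hyps Ap Am a b -> 0 < eps -> a <= t <= b ->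
  t ^ 2 * MM Ap Am t <= a ^ 2 * MM Ap Am a + eps * (t - a + 1).
Proof.
  intros H Heps Ht.
  pose proof H as [Hab _].
  set (g := fun s => s ^ 2 * MM Ap Am s - eps * s).
  set (g0 := a ^ 2 * MM Ap Am a - eps * a + eps).
  assert (HMa : 0 <= MM Ap Am a) by (apply (MM_nn Ap Am a b); auto; lra).
  destruct (core Ap Am a b eps (g0 + eps * b) H Heps) as [dl [Hdl Hcore]].
  { unfold g0. nra. }
  destruct (Rle_dec (g t) g0) as [Hgt|Hgt].
  { unfold g, g0 in Hgt. lra. }
  exfalso. apply Rnot_le_lt in Hgt.
  set (T := fun s => a <= s <= t /\ forall r, a <= r <= s -> g r <= g0).
  assert (Ta : T a).
  { split. lra. intros r Hr. replace r with a by lra. unfold g, g0. lra. }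
  destruct (completeness T) as [ss [Hub Hlub]].
  { exists t. intros x [Hx _]. lra. }
  { exists a. exact Ta. }
  assert (Hss1 : a <= ss) by (apply Hub; exact Ta).
  assert (Hss2 : ss <= t) by (apply Hlub; intros x [Hx _]; lra).
  assert (HL : exists r, T r /\ ss - dl / 4 < r).
  { apply NNPP. intros Hn. assert (ss <= ss - dl / 4); [|lra].
    apply Hlub. intros x Tx. apply Rnot_lt_le. intros Hx. apply Hn. exists x; auto. }
  destruct HL as [r [[Hr1 Hr2] Hr3]].
  assert (Hrs : r <= ss) by (apply Hub; split; auto).
  set (m := Rmin (ss + dl / 4) t).
  assert (Hm : ~ T m).
  { intros Tm. assert (m <= ss) by (apply Hub; exact Tm).
    unfold m in *. destruct (Rle_dec (ss + dl / 4) t).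
    - rewrite Rmin_left in H0 by lra. lra.
    - rewrite Rmin_right in * by lra. destruct Tm as [_ Tm]. specialize (Tm t ltac:(lra)). lra. }
  assert (Hm1 : a <= m <= t).
  { unfold m. split. apply Rmin_glb; lra. apply Rmin_r. }
  assert (Hm2 : m <= ss + dl / 4) by apply Rmin_l.
  assert (HR : exists r', a <= r' <= m /\ g0 < g r').
  { apply NNPP. intros Hn. apply Hm. split. exact Hm1. intros r' Hr'.
    apply Rnot_lt_le. intros Hc. apply Hn. exists r'. auto. }
  destruct HR as [r' [Hr'1 Hr'2]].
  assert (Hrr : r < r').
  { apply Rnot_le_lt. intros Hc. specialize (Hr2 r' ltac:(lra)). lra. }
  assert (Hgr := Hr2 r ltac:(lra)).
  specialize (Hcore r r' ltac:(lra) Hrr ltac:(lra) ltac:(lra)).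
  unfold g in Hgr, Hr'2. 
  assert (r ^ 2 * MM Ap Am r <= g0 + eps * b) by (assert (eps * r <= eps * b) by nra; lra).
  specialize (Hcore H0). lra.
Qed.

Lemma main_abstract Ap Am a b t : Hyps Ap Am a b -> a <= t <= b ->
  t ^ 2 * MM Ap Am t <= a ^ 2 * MM Ap Am a.
Proof.
  intros H Ht. apply Rnot_lt_le. intros Hc.
  set (eps := (t ^ 2 * MM Ap Am t - a ^ 2 * MM Ap Am a) / (2 * (t - a + 1))).
  assert (Hpos : 0 < 2 * (t - a + 1)) by lra.
  assert (Heps : 0 < eps) by (unfold eps; apply Rdiv_lt_0_compat; lra).
  pose proof (main_eps Ap Am a b eps t H Heps Ht).
  assert (eps * (t - a + 1) = (t ^ 2 * MM Ap Am t - a ^ 2 * MM Ap Am a) / 2) by (unfold eps; field; lra).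
  lra.
Qed.
Lemma cont2_2d f : cont2 f -> forall t th, continuity_2d_pt f t th.
Proof.
  intros H t th. apply continuity_2d_pt_filterlim. exact (H t th).
Qed.
Lemma t1 f : Ck 2 f -> forall x y, continuity_2d_pt (d_tau (d_th f)) x y.
Proof.
  intros [H1 [H2 [H3 H4]]] x y. apply cont2_2d. exact (proj1 (proj2 (proj2 H4))).
Qed.
Lemma schwarz2 f : Ck 2 f -> forall x y, d_tau (d_th f) x y = d_th (d_tau f) x y.
Proof.
  intros HC x y. pose proof HC as [H1 [H2 [H3 H4]]].
  assert (L : locally_2d (fun u v : R =>
          ex_derive (fun z : R => f z v) u /\
          ex_derive (fun z : R => f u z) v /\
          ex_derive (fun z : R => d_th f z v) u /\
          ex_derive (fun z : R => d_tau f u z) v) x y).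
  { exists (mkposreal 1 Rlt_0_1). intros u v _ _.
    split; [exact (proj1 (H2 u v))|]. split; [exact (proj2 (H2 u v))|]. split.
    + exact (proj1 (proj1 (proj2 H4) u v)).
    + exact (proj2 (proj1 (proj2 H3) u v)). }
exact (Schwarz f x y L (t1 f HC x y) (cont2_2d _ (proj2 (proj2 (proj2 H3))) x y)).
Qed.



Definition Apf (P Q : R -> R -> R) : R -> R -> R := fun t th =>
  (d_tau P t th - / t * P t th + exp (- t) * d_th P t th) ^ 2
  + exp (2 * P t th) * (d_tau Q t th + exp (- t) * d_th Q t th) ^ 2.
Definition Amf (P Q : R -> R -> R) : R -> R -> R := fun t th =>
  (d_tau P t th - / t * P t th - exp (- t) * d_th P t th) ^ 2
  + exp (2 * P t th) * (d_tau Q t th - exp (- t) * d_th Q t th) ^ 2.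

Lemma F_eq P Q t : F P Q t = / 2 * sup_th (Apf P Q t) + / 2 * sup_th (Amf P Q t).
Proof. reflexivity. Qed.

Lemma c2sq f x y : continuity_2d_pt f x y -> continuity_2d_pt (fun u v => (f u v) ^ 2) x y.
Proof.
  intros H. apply continuity_2d_pt_ext with (fun u v => f u v * f u v).
  intros; ring. apply continuity_2d_pt_mult; auto.
Qed.

Lemma c2exp f x y : continuity_2d_pt f x y -> continuity_2d_pt (fun u v => exp (f u v)) x y.
Proof.
  intros H. apply continuity_1d_2d_pt_comp; auto.
  apply derivable_continuous_pt. apply derivable_pt_exp.
Qed.

Lemma c2scal c f x y : continuity_2d_pt f x y -> continuity_2d_pt (fun u v => c * f u v) x y.
Proof.
  intros H. apply (continuity_2d_pt_mult (fun _ _ => c)); auto. apply continuity_2d_pt_const.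
Qed.



Lemma cont_Apf P Q x y : x <> 0 ->
  cont2 P -> cont2 (d_tau P) -> cont2 (d_th P) -> cont2 (d_tau Q) -> cont2 (d_th Q) ->
  continuity_2d_pt (Apf P Q) x y /\ continuity_2d_pt (Amf P Q) x y.
Proof.
  intros Hx H1 H2 H3 H4 H5.
  apply cont2_2d with (t := x) (th := y) in H1, H2, H3, H4, H5.
  assert (Hi : continuity_2d_pt (fun u v => / u) x y)
    by (apply (continuity_2d_pt_inv (fun u v => u)); [apply continuity_2d_pt_id1| exact Hx]).
  assert (He : continuity_2d_pt (fun u v => exp (- u)) x y)
    by (apply (c2exp (fun u v => - u)); apply (continuity_2d_pt_opp (fun u v => u)); apply continuity_2d_pt_id1).
  assert (HE : continuity_2d_pt (fun u v => exp (2 * P u v)) x y)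
    by (apply (c2exp (fun u v => 2 * P u v)); apply c2scal; exact H1).
  split; unfold Apf, Amf.
  - apply (continuity_2d_pt_plus (fun u v => (d_tau P u v - / u * P u v + exp (- u) * d_th P u v) ^ 2)
      (fun u v => exp (2 * P u v) * (d_tau Q u v + exp (- u) * d_th Q u v) ^ 2)).
    + apply (c2sq (fun u v => d_tau P u v - / u * P u v + exp (- u) * d_th P u v)).
      apply continuity_2d_pt_plus. apply continuity_2d_pt_minus. exact H2.
      apply continuity_2d_pt_mult; auto. apply continuity_2d_pt_mult; auto.
    + apply continuity_2d_pt_mult; auto.
      apply (c2sq (fun u v => d_tau Q u v + exp (- u) * d_th Q u v)).
      apply continuity_2d_pt_plus. exact H4. apply continuity_2d_pt_mult; auto.
  - apply (continuity_2d_pt_plus (fun u v => (d_tau P u v - / u * P u v - exp (- u) * d_th P u v) ^ 2)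
      (fun u v => exp (2 * P u v) * (d_tau Q u v - exp (- u) * d_th Q u v) ^ 2)).
    + apply (c2sq (fun u v => d_tau P u v - / u * P u v - exp (- u) * d_th P u v)).
      apply continuity_2d_pt_minus. apply continuity_2d_pt_minus. exact H2.
      apply continuity_2d_pt_mult; auto. apply continuity_2d_pt_mult; auto.
    + apply continuity_2d_pt_mult; auto.
      apply (c2sq (fun u v => d_tau Q u v - exp (- u) * d_th Q u v)).
      apply continuity_2d_pt_minus. exact H4. apply continuity_2d_pt_mult; auto.
Qed.

Lemma per_deriv f : periodic_th f ->
  (forall t th, ex_derive (fun s => f t s) th) ->
  periodic_th (d_tau f) /\ periodic_th (d_th f).
Proof.
  intros Hp Hd. split; intros t th.
  - unfold d_tau. apply Derive_ext. intros s. apply Hp.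
  - unfold d_th.
    destruct (Hd t (th + 2 * PI)) as [D HD].
    assert (H1 : is_derive (fun s => f t (s + 2 * PI)) th D).
    { replace D with (1 * D) by ring.
      apply (is_derive_comp (fun s => f t s) (fun s => s + 2 * PI) th D 1).
      exact HD. 
      auto_derive; auto; ring. }
    assert (H2 : is_derive (fun s => f t s) th D).
    { eapply is_derive_ext; [|exact H1]. intros s; simpl. apply Hp. }
    transitivity D. exact (is_derive_unique _ _ _ HD). symmetry. exact (is_derive_unique _ _ _ H2).
Qed.

Lemma per_nat (f : R -> R) : (forall th, f (th + 2 * PI) = f th) ->
  forall n th, f (th + 2 * PI * INR n) = f th.
Proof.
  intros Hf n. induction n as [|n IH]; intros th.
  - simpl. f_equal. ring.
  - rewrite S_INR. replace (th + 2 * PI * (INR n + 1)) with ((th + 2 * PI * INR n) + 2 * PI) by ring.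
    rewrite Hf. apply IH.
Qed.

Lemma reduce (f : R -> R) : (forall th, f (th + 2 * PI) = f th) ->
  forall th, exists th', 0 <= th' <= 2 * PI /\ f th = f th'.
Proof.
  intros Hf th. pose proof PI_RGT_0 as Hpi.
  assert (H2 : 0 < 2 * PI) by lra.
  destruct (nfloor_ex (Rabs th / (2 * PI))) as [N HN].
  { apply Rmult_le_pos. apply Rabs_pos. left; apply Rinv_0_lt_compat; lra. }
  set (z := th + 2 * PI * (INR N + 1)).
  assert (Hz : 0 <= z).
  { unfold z. assert (Rabs th < 2 * PI * (INR N + 1)).
    { apply Rmult_lt_reg_r with (/ (2 * PI)). apply Rinv_0_lt_compat; lra.
      replace (2 * PI * (INR N + 1) * / (2 * PI)) with (INR N + 1) by (field; lra). apply HN. }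
    pose proof (Rle_abs (- th)). rewrite Rabs_Ropp in H0. lra. }
  destruct (nfloor_ex (z / (2 * PI))) as [m Hm].
  { apply Rmult_le_pos; [lra| left; apply Rinv_0_lt_compat; lra]. }
  exists (z - 2 * PI * INR m). split.
  - destruct Hm as [Hm1 Hm2].
    assert (2 * PI * INR m <= z).
    { replace z with (2 * PI * (z / (2 * PI))) by (field; lra). apply Rmult_le_compat_l; lra. }
    assert (z < 2 * PI * (INR m + 1)).
    { replace z with (2 * PI * (z / (2 * PI))) by (field; lra). apply Rmult_lt_compat_l; lra. }
    lra.
  - rewrite <- (per_nat f Hf (S N) th). rewrite <- (per_nat f Hf m (z - 2 * PI * INR m)).
    f_equal. rewrite S_INR. unfold z. ring.
Qed.

Lemma max_per (f : R -> R) : (forall th, continuity_pt f th) -> (forall th, f (th + 2 * PI) = f th) ->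
  (forall th, f th <= sup_th f) /\ exists th, 0 <= th <= 2 * PI /\ f th = sup_th f.
Proof.
  intros Hc Hf. pose proof PI_RGT_0.
  destruct (continuity_ab_maj f 0 (2 * PI)) as [Mx [HM1 HM2]]. lra. intros; apply Hc.
  assert (Hall : forall th, f th <= f Mx).
  { intros th. destruct (reduce f Hf th) as [th' [H1 H2]]. rewrite H2. apply HM1; auto. }
  assert (Hs : sup_th f = f Mx).
  { unfold sup_th. rewrite (is_lub_Rbar_unique _ (Finite (f Mx))). reflexivity.
    split.
    - intros y [th ->]. simpl. apply Hall.
    - intros b Hb. apply Hb. exists Mx. reflexivity. }
  rewrite Hs. split. exact Hall. exists Mx. auto.
Qed.

Lemma per_Apf P Q : periodic_th P -> periodic_th Q ->
  (forall t th, ex_derive (fun s => P t s) th) -> (forall t th, ex_derive (fun s => Q t s) th) ->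
  forall t th, Apf P Q t (th + 2 * PI) = Apf P Q t th /\ Amf P Q t (th + 2 * PI) = Amf P Q t th.
Proof.
  intros HP HQ HdP HdQ t th.
  destruct (per_deriv P HP HdP) as [A1 A2].
  destruct (per_deriv Q HQ HdQ) as [A3 A4].
  unfold Apf, Amf. rewrite HP, A1, A2, A3, A4. split; reflexivity.
Qed.

Lemma ineq_key s p ap am X Y E : 2 <= s -> 1 <= p <= s - 1 -> 0 < E ->
  - (ap ^ 2 + E * X ^ 2) + (1 - 2 / s) * ap * am + (1 - 2 * p / s) * E * X * Y
  <= - (1 - (1 - 2 / s) / 2) * (ap ^ 2 + E * X ^ 2) + (1 - 2 / s) / 2 * (am ^ 2 + E * Y ^ 2).
Proof.
  intros Hs Hp HE.
  set (k := 1 - 2 / s). set (m := 1 - 2 * p / s).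
  assert (Hk : 0 <= k).
  { unfold k. assert (2 / s <= 1) by (apply Rmult_le_reg_r with s; [lra| field_simplify; lra]). lra. }
  assert (Hm1 : m <= k).
  { unfold m, k. assert (2 / s <= 2 * p / s) by (unfold Rdiv; apply Rmult_le_compat_r; [left; apply Rinv_0_lt_compat; lra| lra]). lra. }
  assert (Hm2 : - m <= k).
  { unfold m, k. assert (2 * p / s <= 2 - 2 / s).
    { apply Rmult_le_reg_r with s. lra.
      replace (2 * p / s * s) with (2 * p) by (field; lra).
      replace ((2 - 2 / s) * s) with (2 * s - 2) by (field; lra). lra. }
    lra. }
  assert (A1 : k * ap * am <= k / 2 * (ap ^ 2 + am ^ 2)).
  { assert (0 <= k * (ap - am) ^ 2) by (apply Rmult_le_pos; [lra| apply pow2_ge_0]). nra. }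
  assert (A2 : m * X * Y <= k / 2 * (X ^ 2 + Y ^ 2)).
  { destruct (Rle_dec 0 (X * Y)). 
    - assert (m * (X * Y) <= k * (X * Y)) by (apply Rmult_le_compat_r; lra).
      assert (0 <= k * (X - Y) ^ 2) by (apply Rmult_le_pos; [lra| apply pow2_ge_0]). nra.
    - assert (- m * (- (X * Y)) <= k * (- (X * Y))) by (apply Rmult_le_compat_r; lra).
      assert (0 <= k * (X + Y) ^ 2) by (apply Rmult_le_pos; [lra| apply pow2_ge_0]). nra. }
  assert (A3 : E * (m * X * Y) <= E * (k / 2 * (X ^ 2 + Y ^ 2))) by (apply Rmult_le_compat_l; lra).
  nra.
Qed.

Lemma exp2 s : exp (-2 * s) = exp (- s) ^ 2.
Proof. replace (-2 * s) with (- s + - s) by ring. rewrite exp_plus. ring. Qed.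

Lemma Ck_down k : forall f, Ck (S k) f -> Ck k f.
Proof.
  induction k as [|k IH]; intros f H.
  - exact (proj1 H).
  - destruct H as [H1 [H2 [H3 H4]]]. split; [exact H1|]. split; [exact H2|].
    split; apply IH; assumption.
Qed.

Lemma deriv_p (P Q : R -> R -> R) (tau1 tau2 : R)
  (HPs : smooth2 P) (HQs : smooth2 Q)
  (HeqP : forall t th, tau1 <= t <= tau2 ->
     d_tau (d_tau P) t th - exp (-2 * t) * d_th (d_th P) t th
     - exp (2 * P t th) * ((d_tau Q t th) ^ 2 - exp (-2 * t) * (d_th Q t th) ^ 2) = 0)
  (HeqQ : forall t th, tau1 <= t <= tau2 ->
     d_tau (d_tau Q) t th - exp (-2 * t) * d_th (d_th Q) t th
     + 2 * (d_tau P t th * d_tau Q t th - exp (-2 * t) * d_th P t th * d_th Q t th) = 0)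
  (H12 : 2 <= tau1 <= tau2)
  (HPb : forall t th, tau1 <= t <= tau2 -> 1 <= P t th <= t - 1) :
  forall th0 s0 s, tau1 <= s <= tau2 -> exists D,
      is_derive (fun r => Apf P Q r (th0 + exp (- r) - exp (- s0))) s D /\
      D <= - (1 - (1 - 2 / s) / 2) * Apf P Q s (th0 + exp (- s) - exp (- s0))
           + (1 - 2 / s) / 2 * Amf P Q s (th0 + exp (- s) - exp (- s0)).
Proof.
  intros th0 s0 s Hs.
  assert (Hc : is_derive (fun r => th0 + exp (- r) - exp (- s0)) s (- exp (- s))).
  { auto_derive; auto; ring. }
  pose proof (HPs 2%nat) as P2. pose proof (HQs 2%nat) as Q2.
  pose proof (Ck_down 1 P P2) as P1. pose proof (Ck_down 1 Q Q2) as Q1.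
  destruct P2 as [_ [_ [P2t P2th]]]. destruct Q2 as [_ [_ [Q2t Q2th]]].
  pose proof (chain P _ s _ P1 Hc) as C1.
  pose proof (chain (d_tau P) _ s _ P2t Hc) as C2.
  pose proof (chain (d_th P) _ s _ P2th Hc) as C3.
  pose proof (chain (d_tau Q) _ s _ Q2t Hc) as C4.
  pose proof (chain (d_th Q) _ s _ Q2th Hc) as C5.
  assert (Hs0 : s <> 0) by lra.
  pose proof (dAp _ _ _ _ _ _ _ _ _ _ s Hs0 C1 C2 C3 C4 C5) as HH.
  eexists. split. exact HH.
  cbv beta.
  set (c := th0 + exp (- s) - exp (- s0)).
  rewrite (schwarz2 P (HPs 2%nat)).
  pose proof (algP s (P s c) (d_tau P s c) (d_th P s c) (d_tau Q s c) (d_th Q s c)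
     (d_th (d_tau P) s c) (d_th (d_th P) s c) (d_th (d_tau Q) s c) (d_th (d_th Q) s c)
     (exp (- s)) (exp (2 * P s c)) (d_tau (d_tau P) s c) (d_tau (d_tau Q) s c) Hs0) as Eq.
  rewrite (schwarz2 Q (HQs 2%nat)).
  pose proof (HeqP s c Hs) as E1. pose proof (HeqQ s c Hs) as E2.
  rewrite exp2 in E1, E2.
  specialize (Eq E1 E2). cbv zeta in Eq. rewrite Eq.
  unfold Apf, Amf. apply ineq_key. lra. apply HPb; exact Hs. apply exp_pos.
Qed.

Lemma ineq_key_m s p ap am X Y E : 2 <= s -> 1 <= p <= s - 1 -> 0 < E ->
  - (am ^ 2 + E * Y ^ 2) + (1 - 2 / s) * ap * am + (1 - 2 * p / s) * E * X * Y
  <= - (1 - (1 - 2 / s) / 2) * (am ^ 2 + E * Y ^ 2) + (1 - 2 / s) / 2 * (ap ^ 2 + E * X ^ 2).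
Proof.
  intros Hs Hp HE. pose proof (ineq_key s p am ap Y X E Hs Hp HE). lra.
Qed.

Lemma deriv_m (P Q : R -> R -> R) (tau1 tau2 : R)
  (HPs : smooth2 P) (HQs : smooth2 Q)
  (HeqP : forall t th, tau1 <= t <= tau2 ->
     d_tau (d_tau P) t th - exp (-2 * t) * d_th (d_th P) t th
     - exp (2 * P t th) * ((d_tau Q t th) ^ 2 - exp (-2 * t) * (d_th Q t th) ^ 2) = 0)
  (HeqQ : forall t th, tau1 <= t <= tau2 ->
     d_tau (d_tau Q) t th - exp (-2 * t) * d_th (d_th Q) t th
     + 2 * (d_tau P t th * d_tau Q t th - exp (-2 * t) * d_th P t th * d_th Q t th) = 0)
  (H12 : 2 <= tau1 <= tau2)
  (HPb : forall t th, tau1 <= t <= tau2 -> 1 <= P t th <= t - 1) :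
  forall th0 s0 s, tau1 <= s <= tau2 -> exists D,
      is_derive (fun r => Amf P Q r (th0 - exp (- r) + exp (- s0))) s D /\
      D <= - (1 - (1 - 2 / s) / 2) * Amf P Q s (th0 - exp (- s) + exp (- s0))
           + (1 - 2 / s) / 2 * Apf P Q s (th0 - exp (- s) + exp (- s0)).
Proof.
  intros th0 s0 s Hs.
  assert (Hc : is_derive (fun r => th0 - exp (- r) + exp (- s0)) s (exp (- s))).
  { auto_derive; auto; ring. }
  pose proof (HPs 2%nat) as P2. pose proof (HQs 2%nat) as Q2.
  pose proof (Ck_down 1 P P2) as P1. pose proof (Ck_down 1 Q Q2) as Q1.
  destruct P2 as [_ [_ [P2t P2th]]]. destruct Q2 as [_ [_ [Q2t Q2th]]].
  pose proof (chain P _ s _ P1 Hc) as C1.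
  pose proof (chain (d_tau P) _ s _ P2t Hc) as C2.
  pose proof (chain (d_th P) _ s _ P2th Hc) as C3.
  pose proof (chain (d_tau Q) _ s _ Q2t Hc) as C4.
  pose proof (chain (d_th Q) _ s _ Q2th Hc) as C5.
  assert (Hs0 : s <> 0) by lra.
  pose proof (dAm _ _ _ _ _ _ _ _ _ _ s Hs0 C1 C2 C3 C4 C5) as HH.
  eexists. split. exact HH.
  cbv beta.
  set (c := th0 - exp (- s) + exp (- s0)).
  rewrite (schwarz2 P (HPs 2%nat)).
  pose proof (algM s (P s c) (d_tau P s c) (d_th P s c) (d_tau Q s c) (d_th Q s c)
     (d_th (d_tau P) s c) (d_th (d_th P) s c) (d_th (d_tau Q) s c) (d_th (d_th Q) s c)
     (exp (- s)) (exp (2 * P s c)) (d_tau (d_tau P) s c) (d_tau (d_tau Q) s c) Hs0) as Eq.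
  rewrite (schwarz2 Q (HQs 2%nat)).
  pose proof (HeqP s c Hs) as E1. pose proof (HeqQ s c Hs) as E2.
  rewrite exp2 in E1, E2.
  specialize (Eq E1 E2). cbv zeta in Eq. rewrite Eq.
  unfold Apf, Amf. apply ineq_key_m. lra. apply HPb; exact Hs. apply exp_pos.
Qed.

Lemma cont_1d_th f t th : continuity_2d_pt f t th -> continuity_pt (fun s => f t s) th.
Proof.
  intros H eps Heps. destruct (H (mkposreal eps Heps)) as [d Hd].
  exists d. split. apply cond_pos. intros x [_ Hx]. simpl in *.
  unfold R_dist in *. apply Hd. rewrite Rminus_eq_0, Rabs_R0. apply cond_pos. exact Hx.
Qed.

Theorem lemma1 (P Q : R -> R -> R) (tau1 tau2 : R)
  (HPs : smooth2 P) (HQs : smooth2 Q)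
  (HPp : periodic_th P) (HQp : periodic_th Q)
  (HeqP : forall t th, tau1 <= t <= tau2 ->
     d_tau (d_tau P) t th - exp (-2 * t) * d_th (d_th P) t th
     - exp (2 * P t th) * ((d_tau Q t th) ^ 2 - exp (-2 * t) * (d_th Q t th) ^ 2) = 0)
  (HeqQ : forall t th, tau1 <= t <= tau2 ->
     d_tau (d_tau Q) t th - exp (-2 * t) * d_th (d_th Q) t th
     + 2 * (d_tau P t th * d_tau Q t th - exp (-2 * t) * d_th P t th * d_th Q t th) = 0)
  (H12 : 2 <= tau1 <= tau2)
  (HPb : forall t th, tau1 <= t <= tau2 -> 1 <= P t th <= t - 1) :
  forall t, tau1 <= t <= tau2 -> F P Q t <= F P Q tau1 * (tau1 / t) ^ 2.
Proof.
  intros t Ht.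
  pose proof (HPs 1%nat) as [cP [dP [cPt cPth]]].
  pose proof (HQs 1%nat) as [cQ [dQ [cQt cQth]]].
  simpl in cPt, cPth, cQt, cQth.
  assert (Hcont : forall x y, x <> 0 -> continuity_2d_pt (Apf P Q) x y /\ continuity_2d_pt (Amf P Q) x y).
  { intros x y Hx. apply cont_Apf; auto. }
  assert (Hper := per_Apf P Q HPp HQp (fun t th => proj2 (dP t th)) (fun t th => proj2 (dQ t th))).
  assert (H : Hyps (Apf P Q) (Amf P Q) tau1 tau2).
  { split; [exact H12|]. split.
    { intros s th _. unfold Apf, Amf. split;
      (apply Rplus_le_le_0_compat; [apply pow2_ge_0 | apply Rmult_le_pos; [left; apply exp_pos| apply pow2_ge_0]]). }
    split.
    { intros s Hs.
      assert (Hs0 : s <> 0) by lra.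
      destruct (max_per (Apf P Q s)) as [A1 A2].
      { intros th. apply (cont_1d_th (Apf P Q)). apply (Hcont s th Hs0). }
      { intros th. apply (Hper s th). }
      destruct (max_per (Amf P Q s)) as [B1 B2].
      { intros th. apply (cont_1d_th (Amf P Q)). apply (Hcont s th Hs0). }
      { intros th. apply (Hper s th). }
      auto. }
    split.
    { intros eta Heta.
      destruct (uniform_continuity_2d (Apf P Q) tau1 tau2 (-1) (2 * PI + 1))
        with (eps := mkposreal eta Heta) as [d1 Hd1].
      { intros x y Hx _. apply Hcont. lra. }
      destruct (uniform_continuity_2d (Amf P Q) tau1 tau2 (-1) (2 * PI + 1))
        with (eps := mkposreal eta Heta) as [d2 Hd2].
      { intros x y Hx _. apply Hcont. lra. }
      exists (Rmin d1 d2). split. apply Rmin_pos; apply cond_pos.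
      intros x y u v Hx Hy Hu Hv Hux Hvy. split.
      - apply (Hd1 x y u v Hx Hy Hu Hv).
        eapply Rlt_le_trans; [exact Hux| apply Rmin_l].
        eapply Rlt_le_trans; [exact Hvy| apply Rmin_l].
      - apply (Hd2 x y u v Hx Hy Hu Hv).
        eapply Rlt_le_trans; [exact Hux| apply Rmin_r].
        eapply Rlt_le_trans; [exact Hvy| apply Rmin_r]. }
    split.
    { apply (deriv_p P Q tau1 tau2 HPs HQs HeqP HeqQ H12 HPb). }
    { apply (deriv_m P Q tau1 tau2 HPs HQs HeqP HeqQ H12 HPb). } }
  pose proof (main_abstract _ _ _ _ t H Ht) as Hm.
  rewrite !F_eq. unfold MM in Hm.
  set (Mt := sup_th (Apf P Q t) + sup_th (Amf P Q t)) in *.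
  set (Ma := sup_th (Apf P Q tau1) + sup_th (Amf P Q tau1)) in *.
  assert (Ht0 : 0 < t) by lra.
  replace (/ 2 * sup_th (Apf P Q t) + / 2 * sup_th (Amf P Q t)) with (Mt / 2) by (unfold Mt; field).
  replace ((/ 2 * sup_th (Apf P Q tau1) + / 2 * sup_th (Amf P Q tau1)) * (tau1 / t) ^ 2)
    with ((tau1 ^ 2 * Ma) / t ^ 2 / 2) by (unfold Ma; field; lra).
  apply Rmult_le_compat_r. lra.
  apply Rmult_le_reg_r with (t ^ 2). nra.
  replace (tau1 ^ 2 * Ma / t ^ 2 * t ^ 2) with (tau1 ^ 2 * Ma) by (field; lra). nra.
Qed.
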